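(* Consider an episodic RMDP with $\mathcal{S}\times\mathcal{A}$-rectangular robust sets, and let $\pi^\star$ be an optimal robust policy. For any Markov policy $\pi$ and any $s\in\mathcal{S}$, $$V^{\pi^\star}_{1,P^\star,\boldsymbol{\Phi}}(s)-V^{\pi}_{1,P^\star,\boldsymbol{\Phi}}(s)\ge\mathbb{E}_{(P^{\pi^\star,\dagger},\pi^\star)}\Big[\sum_{h=1}^H\sum_{a\in\mathcal{A}}\big(\pi^\star_h(a|s_h)-\pi_h(a|s_h)\big)Q^\pi_{h,P^\star,\boldsymbol{\Phi}}(s_h,a)\ \Big|\ s_1=s\Big],$$ where the expectation is over trajectories generated by the policy $\pi^\star$ and the transition kernels $P^{\pi^\star,\dagger}$.
   Context: An episodic RMDP $(\mathcal{S},\mathcal{A},H,P^\star,R,\boldsymbol{\Phi})$ has finite $\mathcal{S},\mathcal{A}$, nominal kernels $P^\star_h$, rewards $R_h\in[0,1]$. $\mathcal{S}\times\mathcal{A}$-rectangularity: $\boldsymbol{\Phi}(P_h)=\bigotimes_{(s,a)}\mathcal{P}(s,a;P_h)$ with $\mathcal{P}(s,a;P_h)\subseteq\Delta(\mathcal{S})$. Robust value functions of a Markov policy: $V^\pi_{h,P^\star,\boldsymbol{\Phi}}(s)$ and $Q^\pi_{h,P^\star,\boldsymbol{\Phi}}(s,a)$ are the infima, over all $\widetilde P_i(\cdot|s',a')\in\mathcal{P}(s',a';P^\star_i)$, of the expected $\sum_{i=h}^HR_i(s_i,a_i)$ under $\pi$ starting from $s_h=s$ (resp. $(s_h,a_h)=(s,a)$);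 $V_{H+1}\equiv0$. An optimal robust policy maximizes $V^\pi_{1,P^\star,\boldsymbol{\Phi}}(s)$ for all $s$. The kernel $P^{\pi^\star,\dagger}_h(\cdot|s,a)$ is a minimizer of $\mathbb{E}_{P}[V^{\pi^\star}_{h+1,P^\star,\boldsymbol{\Phi}}]$ over $P\in\mathcal{P}(s,a;P^\star_h)$ (assumed to exist). *)

(* Defs.v *)
From HB Require Import structures.
From mathcomp Require Import all_boot all_order all_algebra.
From mathcomp Require Import classical_sets reals.
Set Implicit Arguments. Unset Strict Implicit. Unset Printing Implicit Defensive.
Import Order.TTheory GRing.Theory Num.Theory.
Local Open Scope ring_scope.
Local Open Scope classical_set_scope.

Section RMDP.
Variables (R : realType) (S A : finType).

Definition is_dist (T : finType) (p : T -> R) : Prop :=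
  (forall x, 0 <= p x) /\ \sum_(x : T) p x = 1.

(* Markov (non-stationary, stochastic) policies: pi h s a = pi_h(a|s) *)
Definition policy := nat -> S -> A -> R.
(* time-indexed transition kernels: P h s a s' = P_h(s'|s,a) *)
Definition kernel := nat -> S -> A -> S -> R.

Definition is_policy (H : nat) (pi : policy) : Prop :=
  forall h, (1 <= h <= H)%N -> forall s, is_dist (pi h s).

(* Expected value of sum_{i=h}^{H} g_i(s_i,a_i) for the Markov chain driven by
   policy pi and kernels P, starting from s_h = s ( [k] = number of remaining
   steps; used with k = H + 1 - h ). *)
Fixpoint exp_sum (P : kernel) (pi : policy) (g : nat -> S -> A -> R)
  (k h : nat) (s : S) : R :=
  match k with
  | 0 => 0
  | k'.+1 => \sum_(a : A) pi h s a *
       (g h s a + \sum_(s' : S) P h s a s' * exp_sum P pi g k' h.+1 s')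
  end.

Definition valV (H : nat) (P : kernel) (Rw : nat -> S -> A -> R) (pi : policy)
  (h : nat) (s : S) : R := exp_sum P pi Rw (H.+1 - h) h s.

Definition valQ (H : nat) (P : kernel) (Rw : nat -> S -> A -> R) (pi : policy)
  (h : nat) (s : S) (a : A) : R :=
  Rw h s a + \sum_(s' : S) P h s a s' * valV H P Rw pi h.+1 s'.

(* S x A-rectangular uncertainty: Phi Ph s a = P(s,a;Ph), a subset of Delta(S) *)
Definition uncertainty := (S -> A -> S -> R) -> S -> A -> set (S -> R).

Definition admissible_from (H : nat) (Pstar : kernel) (Phi : uncertainty)
  (h : nat) (Pt : kernel) : Prop :=
  forall i, (h <= i <= H)%N -> forall s a, Phi (Pstar i) s a (Pt i s a).

Definition robustV (H : nat) (Pstar : kernel) (Phi : uncertainty)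
  (Rw : nat -> S -> A -> R) (pi : policy) (h : nat) (s : S) : R :=
  inf [set valV H Pt Rw pi h s | Pt in admissible_from H Pstar Phi h].

Definition robustQ (H : nat) (Pstar : kernel) (Phi : uncertainty)
  (Rw : nat -> S -> A -> R) (pi : policy) (h : nat) (s : S) (a : A) : R :=
  inf [set valQ H Pt Rw pi h s a | Pt in admissible_from H Pstar Phi h].

End RMDP.

(* Main.v *)
Require Import Defs.
From HB Require Import structures.
From mathcomp Require Import all_boot all_order all_algebra.
From mathcomp Require Import classical_sets reals boolp lra.
Import Order.TTheory GRing.Theory Num.Theory.
Local Open Scope ring_scope.
Local Open Scope classical_set_scope.

Lemma sum_dist_addc (R : realType) (T : finType) (p f : T -> R) (c : R) :
  is_dist p -> \sum_x p x * (f x + c) = \sum_x p x * f x + c.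
Proof.
case=> _ h1; rewrite (eq_bigr (fun x => p x * f x + p x * c)); last by move=> x _; rewrite mulrDr.
by rewrite big_split /= -mulr_suml h1 mul1r.
Qed.

Lemma sum_nonneg_le (R : realType) (T : finType) (p f g : T -> R) :
  (forall x, 0 <= p x) -> (forall x, f x <= g x) ->
  \sum_x p x * f x <= \sum_x p x * g x.
Proof. by move=> hp hfg; apply: ler_sum => x _; apply: ler_wpM2l. Qed.

Lemma inf_le0 (R : realType) (E : set R) x :
  E x -> (forall y, E y -> 0 <= y) -> inf E <= x.
Proof. move=> Ex h; apply: (ge_inf _ Ex); by exists 0. Qed.

Lemma le_inf0 (R : realType) (E : set R) x b :
  E x -> (forall y, E y -> b <= y) -> b <= inf E.
Proof. by move=> Ex h; apply: lb_le_inf; [exists x|]. Qed.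

Lemma inf_adh0 (R : realType) (E : set R) x eps :
  E x -> (forall y, E y -> 0 <= y) -> 0 < eps -> exists2 e, E e & e < inf E + eps.
Proof. move=> Ex h he; apply: inf_adherent => //; split; [by exists x | by exists 0]. Qed.

Lemma exp_sum_loc (R : realType) (S A : finType) (P P' : kernel R S A) q g k h s :
  (forall i, (h <= i)%N -> P i = P' i) -> exp_sum P q g k h s = exp_sum P' q g k h s.
Proof.
elim: k h s => [//|k IH] h s E /=.
apply: eq_bigr => a _; congr (_ * (_ + _)); apply: eq_bigr => s' _.
rewrite E // (IH h.+1) // => i hi; apply: E; exact: ltnW.
Qed.

Theorem lemma2 (R : realType) (S A : finType) (H : nat)
  (Pstar : kernel R S A) (Rw : nat -> S -> A -> R) (Phi : uncertainty R S A)
  (pistar : policy R S A) (Pdag : kernel R S A)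
  (hPstar : forall h, (1 <= h <= H)%N -> forall s a, is_dist (Pstar h s a))
  (hRw : forall h, (1 <= h <= H)%N -> forall s a, 0 <= Rw h s a <= 1)
  (hPhi : forall h, (1 <= h <= H)%N -> forall s a p,
      Phi (Pstar h) s a p -> is_dist p)
  (hpistar : is_policy H pistar)
  (hopt : forall pi : policy R S A, is_policy H pi -> forall s,
      robustV H Pstar Phi Rw pi 1 s <= robustV H Pstar Phi Rw pistar 1 s)
  (hPdag_in : forall h, (1 <= h <= H)%N -> forall s a,
      Phi (Pstar h) s a (Pdag h s a))
  (hPdag_min : forall h, (1 <= h <= H)%N -> forall s a p,
      Phi (Pstar h) s a p ->
      \sum_(s' : S) Pdag h s a s' * robustV H Pstar Phi Rw pistar h.+1 s'
        <= \sum_(s' : S) p s' * robustV H Pstar Phi Rw pistar h.+1 s')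
  (pi : policy R S A) (hpi : is_policy H pi) (s : S) :
  robustV H Pstar Phi Rw pistar 1 s - robustV H Pstar Phi Rw pi 1 s >=
  exp_sum Pdag pistar
    (fun h x _ => \sum_(a : A) (pistar h x a - pi h x a)
                     * robustQ H Pstar Phi Rw pi h x a)
    H 1 s.
Proof.
have admD : forall h, (1 <= h)%N -> admissible_from H Pstar Phi h Pdag.
  move=> h h1 i /andP[hi iH] x a; apply: hPdag_in; rewrite iH andbT; exact: leq_trans h1 hi.
have adm_dist : forall h (Pt : kernel R S A), (1 <= h)%N -> admissible_from H Pstar Phi h Pt ->
   forall i, (h <= i <= H)%N -> forall x a, is_dist (Pt i x a).
  move=> h Pt h1 hPt i /andP[hi iH] x a; apply: (hPhi i); first by rewrite iH andbT (leq_trans h1 hi).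
  by apply: hPt; rewrite hi iH.
have adm_S : forall h (Pt : kernel R S A), admissible_from H Pstar Phi h Pt ->
    admissible_from H Pstar Phi h.+1 Pt.
  by move=> h Pt hPt i /andP[hi iH]; apply: hPt; rewrite iH (ltnW hi).
have esum_ge0 : forall q, is_policy H q -> forall (Pt : kernel R S A) k h x, (1 <= h)%N ->
   (h + k <= H.+1)%N ->
   (forall i, (h <= i <= H)%N -> forall x a, is_dist (Pt i x a)) -> 0 <= exp_sum Pt q Rw k h x.
  move=> q hq Pt; elim=> [//|k IH] h x h1 hk hd /=.
  have hH : (h <= H)%N by rewrite addnS ltnS in hk; exact: leq_trans (leq_addr _ _) hk.
  have hh : (1 <= h <= H)%N by rewrite h1 hH.
  apply: sumr_ge0 => a _; apply: mulr_ge0; first by case: (hq h hh x).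
  apply: addr_ge0; first by case/andP: (hRw h hh x a).
  apply: sumr_ge0 => y _; apply: mulr_ge0.
    have hh' : (h <= h <= H)%N by rewrite leqnn hH.
    by case: (hd h hh' x a).
  apply: IH; first exact: leq_trans h1 _.
    by rewrite addSnnS.
  by move=> i /andP[hi iH]; apply: hd; rewrite iH (ltnW hi).
have valV_ge0 : forall q, is_policy H q -> forall h (Pt : kernel R S A) x, (1 <= h <= H.+1)%N ->
    admissible_from H Pstar Phi h Pt -> 0 <= valV H Pt Rw q h x.
  move=> q hq h Pt x /andP[h1 hH] hPt; rewrite /valV; apply: esum_ge0 => //.
    by rewrite subnKC.
  exact: adm_dist hPt.
have V_ge0 : forall q, is_policy H q -> forall h x, (1 <= h <= H.+1)%N ->
    0 <= robustV H Pstar Phi Rw q h x.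
  move=> q hq h x hh; apply: (@le_inf0 _ _ (valV H Pdag Rw q h x)).
    by exists Pdag => //; apply: admD; case/andP: hh.
  by move=> y [Pt hPt <-]; apply: valV_ge0.
have V_le : forall q, is_policy H q -> forall h (Pt : kernel R S A) x, (1 <= h <= H.+1)%N ->
    admissible_from H Pstar Phi h Pt -> robustV H Pstar Phi Rw q h x <= valV H Pt Rw q h x.
  move=> q hq h Pt x hh hPt; apply: inf_le0; first by exists Pt.
  by move=> y [Pt' hPt' <-]; apply: valV_ge0.
have valV_unf : forall q h (Pt : kernel R S A) x, (h <= H)%N ->
    valV H Pt Rw q h x = \sum_a q h x a *
      (Rw h x a + \sum_y Pt h x a y * valV H Pt Rw q h.+1 y).
  by move=> q h Pt x hH; rewrite /valV subSn // subSS.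
pose M q h x a := inf [set \sum_y p y * robustV H Pstar Phi Rw q h.+1 y
                       | p in Phi (Pstar h) x a].
have M_nn : forall q, is_policy H q -> forall h x a, (1 <= h <= H)%N ->
    forall z, [set \sum_y p y * robustV H Pstar Phi Rw q h.+1 y | p in Phi (Pstar h) x a] z -> 0 <= z.
  move=> q hq h x a hh z [p' hp' <-]; apply: sumr_ge0 => y _; apply: mulr_ge0.
    by case: (hPhi h hh x a p' hp').
  by apply: V_ge0 => //; case/andP: hh => _ hH; rewrite !ltnS hH.
have M_le : forall q, is_policy H q -> forall h x a p, (1 <= h <= H)%N -> Phi (Pstar h) x a p ->
    M q h x a <= \sum_y p y * robustV H Pstar Phi Rw q h.+1 y.
  move=> q hq h x a p hh hp; apply: inf_le0; first by exists p.
  exact: M_nn.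
have M_adh : forall q, is_policy H q -> forall h x a eps, (1 <= h <= H)%N -> 0 < eps ->
    exists p, Phi (Pstar h) x a p /\
      \sum_y p y * robustV H Pstar Phi Rw q h.+1 y < M q h x a + eps.
  move=> q hq h x a eps hh he.
  have [e [p hp <-] hl] := @inf_adh0 _ _ _ eps (ex_intro2 _ _ (Pdag h x a) (hPdag_in h hh x a) erefl)
     (M_nn q hq h x a hh) he.
  by exists p.
have q_nn : forall q : policy R S A, is_policy H q -> forall h x a, (1 <= h <= H)%N -> 0 <= q h x a.
  by move=> q hq h x a hh; case: (hq h hh x).
have hS : forall h, (1 <= h <= H)%N -> (1 <= h.+1 <= H.+1)%N.
  by move=> h /andP[_ hH]; rewrite !ltnS hH.
have hW : forall h, (1 <= h <= H)%N -> (1 <= h <= H.+1)%N.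
  by move=> h /andP[h1 hH]; rewrite h1 (leqW hH).
have lowerW : forall q, is_policy H q -> forall h x, (1 <= h <= H)%N ->
    \sum_a q h x a * (Rw h x a + M q h x a) <= robustV H Pstar Phi Rw q h x.
  move=> q hq h x hh; apply: (@le_inf0 _ _ (valV H Pdag Rw q h x)).
    by exists Pdag => //; apply: admD; case/andP: hh.
  move=> z [Pt hPt <-]; rewrite valV_unf; last by case/andP: hh.
  apply: sum_nonneg_le => [a|a]; first exact: q_nn.
  rewrite lerD2l; apply: le_trans (M_le q hq h x a _ hh (hPt h _ x a)) _.
    by case/andP: hh => h1 hH; rewrite leqnn hH.
  apply: sum_nonneg_le => [y|y].
    have hh' : (h <= h <= H)%N by case/andP: hh => _ hH; rewrite leqnn hH.
    by case: (adm_dist h Pt (proj1 (andP hh)) hPt h hh' x a).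
  by apply: V_le => //; [exact: hS | exact: adm_S].
pose simP q h := forall eps, 0 < eps -> exists Pt : kernel R S A,
  admissible_from H Pstar Phi h Pt /\
  forall x, valV H Pt Rw q h x <= robustV H Pstar Phi Rw q h x + eps.
have stepW : forall q, is_policy H q -> forall h, (1 <= h <= H)%N -> simP q h.+1 ->
    forall eps, 0 < eps -> exists Pt : kernel R S A,
    admissible_from H Pstar Phi h Pt /\
    forall x, valV H Pt Rw q h x <= \sum_a q h x a * (Rw h x a + M q h x a) + eps.
  move=> q hq h hh sim eps he.
  have he2 : 0 < eps / 2 by apply: divr_gt0.
  have [Pt [hPt hle]] := sim _ he2.
  have: forall xa : S * A, exists p, Phi (Pstar h) xa.1 xa.2 p /\
      \sum_y p y * robustV H Pstar Phi Rw q h.+1 y < M q h xa.1 xa.2 + eps / 2.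
    by move=> [x a]; apply: M_adh.
  case/choice => f hf.
  pose Pt' : kernel R S A := fun i => if i == h then (fun x a => f (x, a)) else Pt i.
  have loc : forall y, valV H Pt' Rw q h.+1 y = valV H Pt Rw q h.+1 y.
    move=> y; rewrite /valV; apply: exp_sum_loc => i hi.
    by rewrite /Pt' gtn_eqF.
  exists Pt'; split.
    move=> i hi x a; rewrite /Pt'; case: eqP => [->|/eqP ne]; first exact: (hf (x, a)).1.
    apply: hPt; case/andP: hi => hi iH; by rewrite iH andbT ltn_neqAle eq_sym ne hi.
  move=> x; rewrite valV_unf; last by case/andP: hh.
  rewrite {1}/Pt' eqxx.
  apply: le_trans (_ : _ <= \sum_a q h x a * (Rw h x a + M q h x a + eps)) _; last first.
    by rewrite sum_dist_addc //; apply: hq.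
  apply: sum_nonneg_le => [a|a]; first exact: q_nn.
  rewrite -addrA lerD2l.
  apply: le_trans (_ : _ <= \sum_y f (x, a) y * (robustV H Pstar Phi Rw q h.+1 y + eps / 2)) _.
    apply: sum_nonneg_le => [y|y].
      by case: (hPhi h hh x a _ (hf (x, a)).1).
    by rewrite loc hle.
  rewrite sum_dist_addc; last exact: (hPhi h hh x a _ (hf (x, a)).1).
  have := (hf (x, a)).2 => /=; lra.
have sim_all : forall q, is_policy H q -> forall k h, (h + k = H.+1)%N -> (1 <= h)%N -> simP q h.
  move=> q hq; elim=> [|k IH] h hk h1 eps he.
    rewrite addn0 in hk; subst h.
    exists Pdag; split; first exact: admD.
    move=> x; rewrite /valV subnn /=.
    have := V_ge0 q hq H.+1 x; rewrite ltnS leqnn => /(_ isT); lra.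
  have hH : (h <= H)%N by rewrite -ltnS -hk -addSnnS leq_addr.
  have hh : (1 <= h <= H)%N by rewrite h1 hH.
  have hs : simP q h.+1 by apply: IH; rewrite ?addSnnS.
  have [Pt [hPt hle]] := stepW q hq h hh hs eps he.
  exists Pt; split => // x.
  have := lowerW q hq h x hh; have := hle x; lra.
have simS : forall q, is_policy H q -> forall h, (1 <= h <= H)%N -> simP q h.+1.
  move=> q hq h /andP[h1 hH].
  have e : (h.+1 + (H - h) = H.+1)%N by rewrite addSn subnKC.
  exact: (sim_all q hq (H - h)%N h.+1 e isT).
have Vup : forall q, is_policy H q -> forall h x, (1 <= h <= H)%N ->
    robustV H Pstar Phi Rw q h x <= \sum_a q h x a * (Rw h x a + M q h x a).
  move=> q hq h x hh; apply/ler_addgt0Pr => e he.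
  have [Pt [hPt hle]] := stepW q hq h hh (simS q hq h hh) e he.
  apply: le_trans (hle x); apply: V_le => //; exact: hW.
have valQ_ge0 : forall q, is_policy H q -> forall h (Pt : kernel R S A) x a, (1 <= h <= H)%N ->
    admissible_from H Pstar Phi h Pt -> 0 <= valQ H Pt Rw q h x a.
  move=> q hq h Pt x a hh hPt; rewrite /valQ; apply: addr_ge0.
    by case/andP: (hRw h hh x a).
  apply: sumr_ge0 => y _; apply: mulr_ge0.
    by case: (hPhi h hh x a _ (hPt h _ x a)) => //; case/andP: hh => _ hH; rewrite leqnn hH.
  by apply: valV_ge0 => //; [exact: hS | exact: adm_S].
have Qlow : forall q, is_policy H q -> forall h x a, (1 <= h <= H)%N ->
    Rw h x a + M q h x a <= robustQ H Pstar Phi Rw q h x a.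
  move=> q hq h x a hh; apply: (@le_inf0 _ _ (valQ H Pdag Rw q h x a)).
    by exists Pdag => //; apply: admD; case/andP: hh.
  move=> z [Pt hPt <-]; rewrite /valQ lerD2l.
  have hh' : (h <= h <= H)%N by case/andP: hh => _ hH; rewrite leqnn hH.
  apply: le_trans (M_le q hq h x a _ hh (hPt h hh' x a)) _.
  apply: sum_nonneg_le => [y|y].
    by case: (adm_dist h Pt (proj1 (andP hh)) hPt h hh' x a).
  by apply: V_le => //; [exact: hS | exact: adm_S].
have Qup : forall q, is_policy H q -> forall h x a, (1 <= h <= H)%N ->
    robustQ H Pstar Phi Rw q h x a <=
    Rw h x a + \sum_y Pdag h x a y * robustV H Pstar Phi Rw q h.+1 y.
  move=> q hq h x a hh; apply/ler_addgt0Pr => e he.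
  have [Pt [hPt hle]] := simS q hq h hh e he.
  pose Pt' : kernel R S A := fun i => if i == h then Pdag h else Pt i.
  have loc : forall y, valV H Pt' Rw q h.+1 y = valV H Pt Rw q h.+1 y.
    move=> y; rewrite /valV; apply: exp_sum_loc => i hi.
    by rewrite /Pt' gtn_eqF.
  have hPt' : admissible_from H Pstar Phi h Pt'.
    move=> i hi x' a'; rewrite /Pt'; case: eqP => [->|/eqP ne].
      exact: hPdag_in.
    apply: hPt; case/andP: hi => hi iH; by rewrite iH andbT ltn_neqAle eq_sym ne hi.
  apply: le_trans (_ : _ <= valQ H Pt' Rw q h x a) _.
    apply: inf_le0; first by exists Pt'.
    by move=> z [P2 hP2 <-]; apply: valQ_ge0.
  rewrite /valQ {1}/Pt' eqxx -addrA lerD2l.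
  apply: le_trans (_ : _ <= \sum_y Pdag h x a y * (robustV H Pstar Phi Rw q h.+1 y + e)) _.
    apply: sum_nonneg_le => [y|y].
      by case: (hPhi h hh x a _ (hPdag_in h hh x a)).
    by rewrite loc hle.
  by rewrite sum_dist_addc //; exact: (hPhi h hh x a _ (hPdag_in h hh x a)).
have Lstar : forall h x, (1 <= h <= H)%N ->
    \sum_a pistar h x a * (Rw h x a +
       \sum_y Pdag h x a y * robustV H Pstar Phi Rw pistar h.+1 y)
    <= robustV H Pstar Phi Rw pistar h x.
  move=> h x hh; apply: (@le_inf0 _ _ (valV H Pdag Rw pistar h x)).
    by exists Pdag => //; apply: admD; case/andP: hh.
  move=> z [Pt hPt <-]; rewrite valV_unf; last by case/andP: hh.
  apply: sum_nonneg_le => [a|a]; first exact: q_nn.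
  have hh' : (h <= h <= H)%N by case/andP: hh => _ hH; rewrite leqnn hH.
  rewrite lerD2l; apply: le_trans (hPdag_min h hh x a _ (hPt h hh' x a)) _.
  apply: sum_nonneg_le => [y|y].
    by case: (adm_dist h Pt (proj1 (andP hh)) hPt h hh' x a).
  by apply: V_le => //; [exact: hS | exact: adm_S].
set G := (fun h x _ => _).
suff main : forall k h, (h + k = H.+1)%N -> (1 <= h)%N -> forall x,
    exp_sum Pdag pistar G k h x <=
    robustV H Pstar Phi Rw pistar h x - robustV H Pstar Phi Rw pi h x.
  exact: main.
elim=> [|k IH] h hk h1 x.
  rewrite addn0 in hk; subst h => /=.
  have hH1 : (1 <= H.+1 <= H.+1)%N by rewrite leqnn.
  have := V_ge0 pistar hpistar H.+1 x hH1.
  have := V_le pi hpi H.+1 Pdag x hH1 (admD _ h1); rewrite /valV subnn /=.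
  lra.
have hH : (h <= H)%N by rewrite -ltnS -hk -addSnnS leq_addr.
have hh : (1 <= h <= H)%N by rewrite h1 hH.
rewrite /=.
set Vs := robustV H Pstar Phi Rw pistar.
set Vp := robustV H Pstar Phi Rw pi.
set Q := robustQ H Pstar Phi Rw pi h x.
set g := \sum_b (pistar h x b - pi h x b) * Q b.
have hGe : forall a, G h x a = g by [].
have hk' : (h.+1 + k = H.+1)%N by rewrite addSnnS.
apply: le_trans (_ : _ <= \sum_a pistar h x a *
    (g + \sum_y Pdag h x a y * (Vs h.+1 y - Vp h.+1 y))) _.
  apply: sum_nonneg_le => [a|a]; first exact: q_nn.
  rewrite hGe lerD2l; apply: sum_nonneg_le => [y|y].
    by case: (hPhi h hh x a _ (hPdag_in h hh x a)).
  exact: IH.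
have e1 : \sum_a pistar h x a * (g + \sum_y Pdag h x a y * (Vs h.+1 y - Vp h.+1 y)) =
    g + \sum_a pistar h x a * \sum_y Pdag h x a y * (Vs h.+1 y - Vp h.+1 y).
  rewrite (eq_bigr (fun a => pistar h x a * g + pistar h x a *
       \sum_y Pdag h x a y * (Vs h.+1 y - Vp h.+1 y))); last by move=> a _; rewrite mulrDr.
  rewrite big_split /= -mulr_suml; by case: (hpistar h hh x) => _ ->; rewrite mul1r.
have e2 : \sum_a pistar h x a * \sum_y Pdag h x a y * (Vs h.+1 y - Vp h.+1 y) =
    \sum_a pistar h x a * (Rw h x a + \sum_y Pdag h x a y * Vs h.+1 y) -
    \sum_a pistar h x a * (Rw h x a + \sum_y Pdag h x a y * Vp h.+1 y).
  rewrite -sumrB; apply: eq_bigr => a _; rewrite -mulrBr; congr (_ * _).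
  rewrite opprD addrACA subrr add0r -sumrB; apply: eq_bigr => y _; by rewrite mulrBr.
have i3 : \sum_a pistar h x a * Q a <=
    \sum_a pistar h x a * (Rw h x a + \sum_y Pdag h x a y * Vp h.+1 y).
  apply: sum_nonneg_le => [a|a]; first exact: q_nn.
  exact: Qup.
have e4 : g = \sum_a pistar h x a * Q a - \sum_a pi h x a * Q a.
  by rewrite /g -sumrB; apply: eq_bigr => a _; rewrite mulrBl.
have i5 : Vp h x <= \sum_a pi h x a * Q a.
  apply: le_trans (Vup pi hpi h x hh) _.
  apply: sum_nonneg_le => [a|a]; first exact: q_nn.
  exact: Qlow.
have i6 := Lstar h x hh.
rewrite e1 e2; lra.
Qed.
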